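(* Any randomized algorithm for selection in the rank query model that runs in $k$ rounds and succeeds with probability at least $p$ on every input of length $n$ issues, on its worst-case input, at least $np\frac{k+1}{2k}-1$ queries in expectation.
   Context: Selection with rank queries: there is a vector $\vec{x}=(x_1,\ldots,x_n)$ whose ranks form an unknown permutation of $\{1,\ldots,n\}$; a rank $r$ is given and the goal is to output the index $i$ with $\mathrm{rank}(x_i)=r$. Queries have the form ''How is $\mathrm{rank}(x_j)$ compared to $m$?'', with answer ''$<$'', ''$=$'' or ''$>$''. An algorithm runs in $k$ rounds if in each of $k$ rounds it submits a set of queries chosen depending only on answers of earlier rounds (and its randomness), then receives all answers. A randomized algorithm is a distribution over deterministic algorithms; expectations are over its randomness. *)

(* Defs.v *)
From HB Require Import structures.
From mathcomp Require Import all_boot all_order all_algebra all_fingroup.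
From mathcomp Require Import all_classical all_reals all_analysis.
Set Implicit Arguments. Unset Strict Implicit. Unset Printing Implicit Defensive.
Import Order.TTheory GRing.Theory Num.Theory.
Local Open Scope ring_scope.

(* An input of length n: the ranks of x_1..x_n form a permutation of {1..n};
   rank(x_j) = (sigma j).+1 for sigma : {perm 'I_n}. *)
Definition rank (n : nat) (sigma : {perm 'I_n}) (j : 'I_n) : int := Posz (sigma j).+1.

(* A query "How is rank(x_j) compared to m?" *)
Definition query (n : nat) := ('I_n * int)%type.

Inductive answer := ALt | AEq | AGt.

Definition answer_of (n : nat) (sigma : {perm 'I_n}) (q : query n) : answer :=
  let r := rank sigma q.1 in
  if r < q.2 then ALt else if r == q.2 then AEq else AGt.

Definition transcript (n : nat) := seq (query n * answer).

(* Deterministic algorithm: in round t, the (multi)set of queries is chosen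
   from the transcript of earlier rounds; the output is chosen from the final
   transcript. *)
Record detalg (n : nat) := DetAlg {
  dround : nat -> transcript n -> seq (query n);
  dout : transcript n -> 'I_n }.

Fixpoint run (n : nat) (A : detalg n) (sigma : {perm 'I_n}) (t : nat) : transcript n :=
  match t with
  | 0 => [::]
  | t'.+1 => let h := run A sigma t' in
             h ++ [seq (q, answer_of sigma q) | q <- dround A t' h]
  end.

Definition cost (n k : nat) (A : detalg n) (sigma : {perm 'I_n}) : nat :=
  size (run A sigma k).

Definition succeeds (n k : nat) (r : nat) (A : detalg n) (sigma : {perm 'I_n}) : bool :=
  rank sigma (dout A (run A sigma k)) == Posz r.

(* A randomized algorithm: a (discrete) probability distribution over
   deterministic algorithms. *)
Record randalg (R : realType) (n : nat) := RandAlg {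
  ralg : nat -> detalg n;
  rweight : nat -> R;
  rweight_ge0 : forall i, 0 <= rweight i;
  rweight_sum1 : (\sum_(i <oo) (rweight i)%:E)%E = 1%E }.

Definition success_prob (R : realType) (n k r : nat) (B : randalg R n)
  (sigma : {perm 'I_n}) : \bar R :=
  (\sum_(i <oo) (rweight B i * (succeeds k r (ralg B i) sigma)%:R)%:E)%E.

Definition expected_cost (R : realType) (n k : nat) (B : randalg R n)
  (sigma : {perm 'I_n}) : \bar R :=
  (\sum_(i <oo) (rweight B i * (cost k (ralg B i) sigma)%:R)%:E)%E.

(* Main.v *)
Require Import Defs.
From HB Require Import structures.
From mathcomp Require Import all_boot all_order all_algebra all_fingroup.
From mathcomp Require Import all_classical all_reals all_analysis.
From mathcomp Require Import ring lra zify.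
Import Order.TTheory GRing.Theory Num.Theory.
Local Open Scope ring_scope.
Set Implicit Arguments. Unset Strict Implicit. Unset Printing Implicit Defensive.

Section Psi.
Variable R : realType.

Definition psi (c : R) (j u : nat) : R :=
  match j with
  | 0 => - c / u%:R
  | j'.+1 => Num.min (u%:R * ((j'.+2)%:R / (2 * j'.+1)%:R) - c - 1) (-1)
  end.

Lemma key1 (U S c J : R) : 0 < U -> 0 <= S -> S <= U -> 2 <= J ->
  U * ((J + 1) / (2 * J)) - c - 1 <=
  S - c * S / U + (1 - S / U) * ((U - S) * (J / (2 * (J - 1))) - c - 1).
Proof.
move=> U0 S0 SU J2.
rewrite -subr_ge0.
have UN : U != 0 by rewrite gt_eqF.
have JN : J != 0 by apply/eqP => h; move: J2; rewrite h; lra.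
have J1N : J - 1 != 0 by rewrite subr_eq0; apply/eqP => h; move: J2; rewrite h; lra.
have -> : S - c * S / U + (1 - S / U) * ((U - S) * (J / (2 * (J - 1))) - c - 1)
   - (U * ((J + 1) / (2 * J)) - c - 1)
   = ((J * S - U) ^+ 2 + 2 * J * (J - 1) * S) / (2 * J * (J - 1) * U).
  by field; rewrite UN JN J1N.
apply: divr_ge0.
  apply: addr_ge0; first exact: sqr_ge0.
  apply: mulr_ge0 => //; apply: mulr_ge0; lra.
apply: mulr_ge0; last lra.
apply: mulr_ge0; lra.
Qed.

Lemma key2 (U S c J : R) : 0 < U -> 0 <= S -> S <= U -> 1 <= J ->
  Num.min (U * ((J + 1) / (2 * J)) - c - 1) (-1) <=
  S - c * S / U + (1 - S / U) * (-1).
Proof.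
move=> U0 S0 SU J1.
have UN : U != 0 by rewrite gt_eqF.
have JN : J != 0 by apply/eqP => h; move: J1; rewrite h; lra.
rewrite ge_min; apply/orP.
have [cU|cU] := lerP c (U + 1).
  right; rewrite -subr_ge0.
  have -> : S - c * S / U + (1 - S / U) * (-1) - (-1) = S * (U - c + 1) / U.
    by field.
  apply: divr_ge0; last lra.
  apply: mulr_ge0; lra.
left; rewrite -subr_ge0.
have -> : S - c * S / U + (1 - S / U) * -1 - (U * ((J + 1) / (2 * J)) - c - 1)
   = (c - U - 1) * ((U - S) / U) + (U * (J - 1) / (2 * J) + 1).
  by field; rewrite UN JN.
apply: addr_ge0.
  apply: mulr_ge0; first lra.
  apply: divr_ge0; lra.
apply: addr_ge0; last lra.
apply: divr_ge0; last lra.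
apply: mulr_ge0; lra.
Qed.


Lemma psi_rec (c : R) j u s : 0 <= c -> (0 < u)%N -> (s <= u)%N ->
  psi c j.+1 u <= s%:R - c * s%:R / u%:R + (1 - s%:R / u%:R) * psi c j (u - s).
Proof.
move=> c0 u0 su.
have U0 : 0 < (u%:R : R) by rewrite ltr0n.
have UN : (u%:R : R) != 0 by rewrite gt_eqF.
have S0 : 0 <= (s%:R : R) by rewrite ler0n.
have SU : (s%:R : R) <= u%:R by rewrite ler_nat.
case: j => [|j] /=.
  rewrite ge_min; apply/orP.
  have -> : (2 / (2 * 1)%:R : R) = 1 by rewrite muln1 divff // pnatr_eq0.
  rewrite mulr1.
  have [->|slt] := eqVneq s u.
    by left; rewrite subnn divff // subrr mul0r addr0 mulrK ?unitfE //; lra.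
  have slt' : (s < u)%N by rewrite ltn_neqAle slt su.
  have S1 : (s%:R : R) <= u%:R - 1.
    by have := slt'; rewrite -(ler_nat R) -natr1; lra.
  have -> : (u - s)%:R = (u%:R - s%:R : R) by rewrite natrB.
  have USN : (u%:R - s%:R : R) != 0 by rewrite subr_eq0; apply/eqP => h; move: S1; rewrite h; lra.
  have [cU|cU] := lerP c u%:R.
    right; rewrite -subr_ge0.
    have -> : s%:R - c * s%:R / u%:R + (1 - s%:R / u%:R) * (- c / (u%:R - s%:R)) - (-1)
       = (s%:R + 1) * (u%:R - c) / u%:R :> R by field; rewrite UN USN.
    apply: divr_ge0; last lra.
    apply: mulr_ge0; lra.
  left; rewrite -subr_ge0.
  have -> : s%:R - c * s%:R / u%:R + (1 - s%:R / u%:R) * (- c / (u%:R - s%:R))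
       - (u%:R - c - 1) = (u%:R - s%:R - 1) * (c - u%:R) / u%:R :> R
    by field; rewrite UN USN.
  apply: divr_ge0; last lra.
  apply: mulr_ge0; lra.
have -> : (u - s)%:R = (u%:R - s%:R : R) by rewrite natrB.
set J : R := (j.+2)%:R.
have J2 : 2 <= J by rewrite /J ler_nat.
have -> : ((j.+3)%:R : R) = J + 1 by rewrite /J -natr1.
have -> : ((2 * j.+2)%:R : R) = 2 * J by rewrite natrM.
have -> : ((2 * j.+1)%:R : R) = 2 * (J - 1) by rewrite natrM /J -[(j.+2)%:R]natr1 addrK.
have [ha|ha] := lerP ((u%:R - s%:R) * (J / (2 * (J - 1))) - c - 1) (-1).
  apply: le_trans (key1 c U0 S0 SU J2).
  by rewrite ge_min lexx.

apply: key2 => //; lra.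
Qed.


End Psi.

Section Comb.
Variables (n : nat) (A : detalg n) (v : 'I_n).

Definition posset (h : transcript n) : {set 'I_n} :=
  [set j | j \in [seq e.1.1 | e <- h]].
Definition Qn (t : nat) (h : transcript n) : {set 'I_n} :=
  posset h :|: [set j | j \in [seq q.1 | q <- dround A t h]].
Definition Q t (s : {perm 'I_n}) := posset (run A s t).
Definition T (s : {perm 'I_n}) : 'I_n := (s^-1)%g v.

Lemma posset_cat h h' : posset (h ++ h') = posset h :|: posset h'.
Proof. by apply/setP => j; rewrite !inE map_cat mem_cat. Qed.

Lemma Q_next t s : Q t.+1 s = Qn t (run A s t).
Proof.
rewrite /Q /Qn /= posset_cat; congr (_ :|: _); apply/setP => j.
by rewrite !inE -map_comp.
Qed.

Lemma Q_sub t s : Q t s \subset Q t.+1 s.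
Proof. by apply/fintype.subsetP => j Hj; rewrite Q_next /Qn inE Hj. Qed.

Lemma swap_run t s a b : a \notin Q t s -> b \notin Q t s ->
  run A (tperm a b * s)%g t = run A s t.
Proof.
elim: t => [//|t IH] Ha Hb.
have Ha' : a \notin Q t s by apply: contra Ha; apply/fintype.subsetP/Q_sub.
have Hb' : b \notin Q t s by apply: contra Hb; apply/fintype.subsetP/Q_sub.
rewrite /= IH //; congr (_ ++ _); apply/eq_in_map => q Hq.
have Hin : q.1 \in Q t.+1 s.
  by rewrite Q_next /Qn inE; apply/orP; right; rewrite inE; apply: map_f.
rewrite /answer_of /rank permM tpermD //.
  by apply: contraNneq Ha => ->.
by apply: contraNneq Hb => ->.
Qed.

Lemma T_swap s a b : T (tperm a b * s)%g = tperm a b (T s).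
Proof. by rewrite /T invMg tpermV permM. Qed.

Lemma swap_sum (R : realType) t (F : transcript n -> 'I_n -> 'I_n -> R) :
  \sum_(s : {perm 'I_n}) \sum_(b : 'I_n)
     (if (T s \notin Q t s) && (b \notin Q t s) then F (run A s t) (T s) b else 0)
  = \sum_(s : {perm 'I_n}) \sum_(b : 'I_n)
     (if (T s \notin Q t s) && (b \notin Q t s) then F (run A s t) b (T s) else 0).
Proof.
rewrite !pair_bigA /=.
pose phi (p : {perm 'I_n} * 'I_n) := ((tperm (T p.1) p.2 * p.1)%g, T p.1).
have phiK : involutive phi.
  move=> [s b]; rewrite /phi /= T_swap tpermL; congr pair.
  by rewrite mulgA tpermC; apply/permP => x; rewrite !permM tpermK.
rewrite (reindex_inj (inv_inj phiK)) /=.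
have key : forall p, (T p.1 \notin Q t p.1) && (p.2 \notin Q t p.1) ->
   [/\ (T (phi p).1 \notin Q t (phi p).1) && ((phi p).2 \notin Q t (phi p).1),
       run A (phi p).1 t = run A p.1 t, T (phi p).1 = p.2 & (phi p).2 = T p.1].
  move=> [s b] /= /andP[H1 H2].
  have Hr := swap_run H1 H2.
  have HT : T (tperm (T s) b * s)%g = b by rewrite T_swap tpermL.
  by rewrite /Q Hr HT -/(Q t s) H1 H2.
apply: eq_bigr => p _.
case P1: ((T p.1 \notin Q t p.1) && (p.2 \notin Q t p.1)).
  by have [-> -> -> _] := key p P1.
case P2: ((T (phi p).1 \notin Q t (phi p).1) && ((phi p).2 \notin Q t (phi p).1)).
  by have [] := key _ P2; rewrite phiK P1.
by [].
Qed.


Definition uh (h : transcript n) := #|~: posset h|.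
Definition sh t (h : transcript n) := #|Qn t h :\: posset h|.
Definition f t s := T s \notin Q t s.

Lemma sum_ind (R : realType) (P : {set 'I_n}) :
  \sum_(b : 'I_n) ((b \in P)%:R : R) = (#|P|%:R).
Proof.
rewrite -sum1_card natr_sum [RHS]big_mkcond; apply: eq_bigr => b _.
by case: (b \in P).
Qed.

Lemma I1 (R : realType) (X : transcript n -> R) t :
  \sum_(s : {perm 'I_n}) (if f t s then X (run A s t) * (sh t (run A s t))%:R else 0)
  = \sum_(s : {perm 'I_n}) (if f t s && (T s \in Q t.+1 s)
        then X (run A s t) * (uh (run A s t))%:R else 0).
Proof.
have := swap_sum t (fun h x y => X h * (y \in Qn t h)%:R).
have E1 : forall s : {perm 'I_n},
  \sum_b (if (T s \notin Q t s) && (b \notin Q t s)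
          then X (run A s t) * (b \in Qn t (run A s t))%:R else 0)
  = if f t s then X (run A s t) * (sh t (run A s t))%:R else 0.
  move=> s; rewrite /f; case: (T s \notin Q t s); last by rewrite big1.
  rewrite /sh -sum_ind mulr_sumr; apply: eq_bigr => b _ /=.
  rewrite [in RHS]inE /Q /posset inE; case: (b \in [seq _ | _ <- _]) => /=.
    by rewrite mulr0.
  by [].
have E2 : forall s : {perm 'I_n},
  \sum_b (if (T s \notin Q t s) && (b \notin Q t s)
          then X (run A s t) * (T s \in Qn t (run A s t))%:R else 0)
  = if f t s && (T s \in Q t.+1 s) then X (run A s t) * (uh (run A s t))%:R else 0.
  move=> s; rewrite /f Q_next; case: (T s \notin Q t s); last by rewrite big1.
  rewrite /uh -sum_ind mulr_sumr /=.
  case: (T s \in Qn t _); last by rewrite big1 // => b _; case: ifP; rewrite ?mulr0.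
  apply: eq_bigr => b _ /=; rewrite [in RHS]inE /Q; case: (b \notin _); by rewrite ?mulr0.
rewrite (eq_bigr _ (fun s _ => E1 s)) (eq_bigr _ (fun s _ => E2 s)).
by [].
Qed.

Lemma I2 (R : realType) t :
  \sum_(s : {perm 'I_n}) (if f t s && (dout A (run A s t) == T s) then 1 else 0 : R)
  <= \sum_(s : {perm 'I_n}) (if f t s then (uh (run A s t))%:R^-1 else 0).
Proof.
have := swap_sum t (fun h x y => ((dout A h == x)%:R / (uh h)%:R : R)).
have E1 : forall s : {perm 'I_n},
  \sum_b (if (T s \notin Q t s) && (b \notin Q t s)
          then ((dout A (run A s t) == T s)%:R / (uh (run A s t))%:R : R) else 0)
  = if f t s && (dout A (run A s t) == T s) then 1 else 0.
  move=> s; rewrite /f; case HT: (T s \notin Q t s); last by rewrite big1.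
  have Hu : (#|~: Q t s|)%:R != 0 :> R.
    rewrite pnatr_eq0 -lt0n card_gt0; apply/set0Pn; exists (T s).
    by rewrite inE.
  rewrite /= -big_mkcondr /= sumr_const /uh -/(Q t s).
  have -> : #|[pred b | b \notin Q t s]| = #|~: Q t s|.
    by apply: eq_card => b; rewrite !inE.
  rewrite -[_ *+ #|~: Q t s|]mulr_natr -mulrA mulVf // mulr1.
  by case: (_ == _).
rewrite (eq_bigr _ (fun s _ => E1 s)) => ->.
apply: ler_sum => s _; rewrite /f; case HT: (T s \notin Q t s); last first.
  by rewrite /= big1.
rewrite /= -big_mkcondr /= -mulr_suml mulrC ler_piMr ?invr_ge0 ?ler0n //.
apply: (@le_trans _ _ (\sum_b ((dout A (run A s t) == b)%:R : R))).
  rewrite [X in _ <= X](bigID (fun b => b \notin Q t s)) /= lerDl.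
  by apply: sumr_ge0 => b _; exact: ler0n.
rewrite (bigD1 (dout A (run A s t))) //= eqxx big1 ?addr0 // => b /negbTE.
by rewrite eq_sym => ->.
Qed.


Variables (R : realType) (k : nat).
Hypothesis hk : (0 < k)%N.
Let c : R := n%:R * ((k.+1)%:R / (2 * k)%:R).
Let c0 : 0 <= c.
Proof. by apply: mulr_ge0; [rewrite ler0n | apply: divr_ge0; rewrite ler0n]. Qed.

Definition Zt t s : R := \sum_(i < t) (if f i s then (sh i (run A s i))%:R else 0).
Definition Phi t s : R := Zt t s + (if f t s then psi c (k - t) (uh (run A s t)) else - c).

Lemma Q_subn t s : Q t s \subset Qn t (run A s t).
Proof. by rewrite -Q_next Q_sub. Qed.

Lemma uh_next t s : uh (run A s t.+1) = (uh (run A s t) - sh t (run A s t))%N.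
Proof.
rewrite /uh /sh -/(Q t.+1 s) -/(Q t s) Q_next.
have H1 := cardsID (Q t s) (Qn t (run A s t)).
have HS := Q_subn t s; move/finset.setIidPr: HS => HS; rewrite HS in H1.
have H2 := cardsC (Q t s).
have H3 := cardsC (Qn t (run A s t)).
lia.
Qed.

Lemma sh_le t s : (sh t (run A s t) <= uh (run A s t))%N.
Proof.
rewrite /sh /uh; apply: subset_leq_card; apply/fintype.subsetP => b.
by rewrite !inE => /andP[].
Qed.

Lemma f_next t s : f t.+1 s = f t s && (T s \notin Q t.+1 s).
Proof.
rewrite /f; case Hn: (T s \in Q t.+1 s) => /=.
  by rewrite andbF.
by rewrite andbT; apply/esym; apply: contraFN Hn; apply/fintype.subsetP/Q_sub.
Qed.

Lemma uh_gt0 t s : f t s -> (0 < uh (run A s t))%N.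
Proof. by move=> H; rewrite /uh card_gt0; apply/set0Pn; exists (T s); rewrite inE. Qed.

Lemma Phi_step t : (t < k)%N -> \sum_s Phi t s <= \sum_s Phi t.+1 s.
Proof.
move=> tk; rewrite -subr_ge0 -sumrB.
set j := (k - t.+1)%N.
have kj : (k - t = j.+1)%N by rewrite /j subnS prednK // subn_gt0.
pose X := fun h => (- c - psi c j (uh h - sh t h)) / (uh h)%:R.
have HI := I1 X t.
have E : forall s, Phi t.+1 s - Phi t s =
   (if f t s then (sh t (run A s t))%:R - psi c j.+1 (uh (run A s t))
                  + psi c j (uh (run A s t) - sh t (run A s t)) else 0)
   + (if f t s && (T s \in Q t.+1 s) then X (run A s t) * (uh (run A s t))%:R else 0).
  move=> s; rewrite /Phi /Zt big_ord_recr /= f_next -/j kj uh_next.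
  case Hf: (f t s) => /=; last by rewrite !addr0 subrr.
  case HQ: (T s \in Q t.+1 s) => /=.
    rewrite /X mulfVK; last by rewrite pnatr_eq0 -lt0n uh_gt0.
    lra.
  lra.
rewrite (eq_bigr _ (fun s _ => E s)) big_split /= -HI -big_split /=.
apply: sumr_ge0 => s _; case Hf: (f t s); last by rewrite addr0.
have /= := psi_rec j c0 (uh_gt0 Hf) (sh_le t s).
rewrite /X; lra.
Qed.


Lemma Phi0 s : Phi 0 s = -1.
Proof.
have Q0 : Q 0 s = finset.set0 by apply/setP => b; rewrite !inE.
have f0 : f 0 s by rewrite /f Q0 inE.
have u0 : uh (run A s 0) = n by rewrite /uh -/(Q 0 s) Q0 finset.setC0 cardsT card_ord.
rewrite /Phi /Zt big_ord0 add0r f0 u0 subn0.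
have kE : k = k.-1.+1 by rewrite prednK.
rewrite kE /= -kE -/c subrr sub0r.
by rewrite /Num.min ltxx.
Qed.

Lemma Zt_le t s : Zt t s <= (#|Q t s|)%:R.
Proof.
elim: t => [|t IH]; first by rewrite /Zt big_ord0 ler0n.
rewrite /Zt big_ord_recr /= -/(Zt t s).
have : (#|Q t.+1 s| = #|Q t s| + sh t (run A s t))%N.
  rewrite /sh Q_next -/(Q t s).
  have H1 := cardsID (Q t s) (Qn t (run A s t)).
  have HS := Q_subn t s; move/finset.setIidPr: HS => HS; rewrite HS in H1.
  lia.
move=> ->; rewrite natrD; apply: lerD => //.
by case: (f t s) => //; rewrite ler0n.
Qed.

Lemma Q_le_cost s : (#|Q k s| <= cost k A s)%N.
Proof.
rewrite /Q /cost /posset.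
apply: (leq_trans _ (_ : (size [seq e.1.1 | e <- run A s k] <= _)%N)).
  apply: (leq_trans _ (card_size _)).
  by apply: subset_leq_card; apply/fintype.subsetP => b; rewrite inE.
by rewrite size_map.
Qed.

Lemma det_bound :
  c * \sum_(s : {perm 'I_n}) ((dout A (run A s k) == T s)%:R : R)
  <= \sum_(s : {perm 'I_n}) ((cost k A s)%:R : R) + #|{perm 'I_n}|%:R.
Proof.
have step : forall t, (t <= k)%N -> \sum_s Phi 0 s <= \sum_s Phi t s.
  elim => [//|t IH] tk.
  apply: le_trans (IH (ltnW tk)) _; exact: Phi_step.
have Hk := step k (leqnn k).
rewrite (eq_bigr _ (fun s _ => Phi0 s)) sumr_const in Hk.
have HS : \sum_(s : {perm 'I_n}) ((dout A (run A s k) == T s)%:R : R)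
   <= \sum_s (if f k s then (uh (run A s k))%:R^-1 else 1).
  apply: le_trans (_ : _ <= \sum_s ((if f k s && (dout A (run A s k) == T s) then 1 else 0)
     + (if f k s then 0 else 1))) _.
    apply: ler_sum => s _; case: (f k s); case: (_ == _) => //=; lra.
  rewrite big_split /=.
  apply: le_trans (lerD (I2 R k) (lexx _)) _.
  rewrite -big_split /=; apply: ler_sum => s _; case: (f k s); lra.
apply: le_trans (ler_wpM2l c0 HS) _.
rewrite mulr_sumr.
have E : forall s, c * (if f k s then (uh (run A s k))%:R^-1 else 1) = Zt k s - Phi k s.
  by move=> s; rewrite /Phi subnn /=; case: (f k s) => /=; rewrite ?mulr1; lra.
rewrite (eq_bigr _ (fun s _ => E s)) sumrB.
have HZ : \sum_s Zt k s <= \sum_s ((cost k A s)%:R : R).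
  apply: ler_sum => s _; apply: le_trans (Zt_le k s) _.
  by rewrite ler_nat Q_le_cost.
move: Hk; rewrite mulNrn => Hk.
lra.
Qed.

End Comb.


Lemma exch (R : realType) (T0 : finType) (F : T0 -> nat -> R) :
  (forall s i, 0 <= F s i) ->
  (\sum_(s : T0) \sum_(i <oo) (F s i)%:E = \sum_(i <oo) (\sum_(s : T0) F s i)%:E)%E.
Proof.
move=> F0; rewrite -nneseries_sum; last by move=> s i _; rewrite lee_fin.
by apply: eq_eseriesr => i _; rewrite sumEFin.
Qed.

Lemma succE n k r (hr : (1 <= r <= n)%N) (rn : (r.-1 < n)%N) (A : detalg n) s :
  succeeds k r A s = (dout A (run A s k) == T (Ordinal rn) s).
Proof.
rewrite /succeeds /rank /T.
case/andP: hr => r1 _.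
set j := dout A _.
have -> : (Posz (s j).+1 == Posz r) = ((s j).+1 == r) by [].
have -> : ((s j).+1 == r) = (s j == Ordinal rn).
  by rewrite -val_eqE /=; apply/eqP/eqP; lia.
apply/eqP/eqP => [<-|->]; [by rewrite permK | by rewrite permKV].
Qed.

Unset Implicit Arguments.

Theorem proposition13 (R : realType) (n k r : nat) (p : R)
  (hk : (0 < k)%N) (hr : (1 <= r <= n)%N) (B : randalg R n) :
  (forall sigma : {perm 'I_n}, (p%:E <= success_prob k r B sigma)%E) ->
  exists sigma : {perm 'I_n},
    ((n%:R * p * ((k.+1)%:R / (2 * k)%:R) - 1)%:E <= expected_cost k B sigma)%E.
Proof.
move=> Hp.
have rn : (r.-1 < n)%N by case/andP: hr => h1 h2; lia.
set c : R := n%:R * ((k.+1)%:R / (2 * k)%:R).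
have c0 : 0 <= c by apply: mulr_ge0; [rewrite ler0n | apply: divr_ge0; rewrite ler0n].
set N := #|{perm 'I_n}|.
have w0 := rweight_ge0 B.
have Hdet : forall i, c * \sum_(s : {perm 'I_n}) ((succeeds k r (ralg B i) s)%:R : R)
    <= \sum_(s : {perm 'I_n}) ((cost k (ralg B i) s)%:R : R) + N%:R.
  move=> i; have := det_bound (ralg B i) (Ordinal rn) R hk.
  by under eq_bigr => s _ do rewrite -(succE k hr rn).
have Claim : (c%:E * \sum_(s : {perm 'I_n}) success_prob k r B s
     <= \sum_(s : {perm 'I_n}) expected_cost k B s + (N%:R)%:E)%E.
  rewrite /success_prob /expected_cost.
  rewrite exch; last by move=> s i; apply: mulr_ge0 => //; rewrite ler0n.
  rewrite exch; last by move=> s i; apply: mulr_ge0 => //; rewrite ler0n.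
  have -> : ((N%:R)%:E = \sum_(i <oo) (N%:R * rweight B i)%:E :> \bar R)%E.
    by rewrite (eq_eseriesr (fun i _ => EFinM _ _)) nneseriesZl ?rweight_sum1 ?mule1 // => i _; rewrite lee_fin.
  rewrite -nneseriesD; first last.
  - by move=> i _ _; rewrite lee_fin mulr_ge0 // ler0n.
  - by move=> i _ _; rewrite lee_fin sumr_ge0 // => s _; rewrite mulr_ge0 // ler0n.
  rewrite -nneseriesZl; last first.
    by move=> i _; rewrite lee_fin sumr_ge0 // => s _; rewrite mulr_ge0 // ler0n.
  apply: lee_nneseries.
    by move=> i _ _; rewrite -EFinM lee_fin mulr_ge0 // sumr_ge0 // => s _; rewrite mulr_ge0 // ler0n.
  move=> i _; rewrite -EFinM -EFinD lee_fin -!mulr_sumr.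
  rewrite mulrCA [N%:R * _]mulrC -mulrDr.
  by apply: ler_wpM2l => //; exact: Hdet.
have Claim2 : ((N%:R * p)%:E <= \sum_(s : {perm 'I_n}) success_prob k r B s)%E.
  have H1 : (\sum_(s : {perm 'I_n}) p%:E <= \sum_(s : {perm 'I_n}) success_prob k r B s)%E.
    by apply: lee_sum => s _; exact: Hp.
  apply: le_trans H1.
  by rewrite sumEFin sumr_const mulr_natl.
set e := fun s => expected_cost k B s.
pose sm := Order.arg_max (1%g : {perm 'I_n}) xpredT e.
have Hmax : forall s, (e s <= e sm)%E by rewrite /sm; case: arg_maxP => // x _ H s; exact: H.
exists sm.
have e0 : (0 <= e sm)%E.
  by apply: nneseries_ge0 => i _ _; rewrite lee_fin mulr_ge0 // ler0n.
change ((n%:R * p * ((k.+1)%:R / (2 * k)%:R) - 1)%:E <= e sm)%E.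
case E: (e sm) => [x| |]; last by rewrite E in e0.
  2: by rewrite leey.
have HS : (\sum_(s : {perm 'I_n}) expected_cost k B s <= (x *+ N)%:E)%E.
  have H1 : (\sum_(s : {perm 'I_n}) e s <= \sum_(s : {perm 'I_n}) e sm)%E.
    by apply: lee_sum => s _; exact: Hmax.
  apply: le_trans H1 _.
  by rewrite E sumEFin sumr_const.
have H2 := le_trans (lee_wpmul2l _ Claim2) Claim.
have H3 := le_trans (H2 (c0 : (0 <= c%:E)%E)) (leeD HS (lexx _)).
rewrite -EFinM -EFinD lee_fin -mulr_natr in H3.
have N0 : (0 < N)%N by apply/card_gt0P; exists 1%g.
have N0' : 0 < (N%:R : R) by rewrite ltr0n.
have H4 : N%:R * (c * p) <= N%:R * (x + 1) by lra.
rewrite ler_pM2l // /c in H4.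
rewrite lee_fin; lra.
Qed.
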